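(* Let $H:2^M\to\mathbb{R}$ be a function with $H(\emptyset)=0$, and let $T^1,\dots,T^n\subseteq M$ satisfy $\bigcap_{i=1}^nT^i=\emptyset$. Suppose that either (1) $H$ is supermodular, or (2) for every $1\le i,j\le n$, $T^i\cup T^j\in\{T^i,T^j\}$. Then $$\sum_{i=1}^nH(T^i)\le\sum_{i=1}^{n-1}H\Big(T^{i+1}\cup\bigcap_{\ell=1}^{i}T^\ell\Big).$$
   Context: $M$ is a finite set. A function $H:2^M\to\mathbb R$ is supermodular if $H(S)+H(T)\le H(S\cup T)+H(S\cap T)$ for all $S,T\subseteq M$. *)

(* Defs.v *)
From HB Require Import structures.
From mathcomp Require Import all_boot all_order all_algebra.
Set Implicit Arguments. Unset Strict Implicit. Unset Printing Implicit Defensive.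
Import Order.TTheory GRing.Theory Num.Theory.
Local Open Scope ring_scope.

Definition supermodular (R : numDomainType) (M : finType) (H : {set M} -> R) :=
  forall S U : {set M}, H S + H U <= H (S :|: U) + H (S :&: U).

(* Main.v *)
Require Import Defs.
From HB Require Import structures.
From mathcomp Require Import all_boot all_order all_algebra.
From mathcomp Require Import lra.
Import Order.TTheory GRing.Theory Num.Theory.
Local Open Scope ring_scope.
Set Implicit Arguments.

Section S.
Variables (M : finType) (Ts : nat -> {set M}).
Definition CC (i : nat) := \bigcap_(1 <= l < i.+1) Ts l.

Lemma CC1 : CC 1 = Ts 1.
Proof. by rewrite /CC big_nat1. Qed.

Lemma CCS i : (1 <= i)%N -> CC i.+1 = CC i :&: Ts i.+1.
Proof. move=> hi; by rewrite /CC big_nat_recr. Qed.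

Lemma CC_chain n :
  (forall i j : nat, (1 <= i <= n)%N -> (1 <= j <= n)%N ->
              Ts i :|: Ts j = Ts i \/ Ts i :|: Ts j = Ts j) ->
  forall i, (1 <= i <= n)%N -> exists k, (1 <= k <= i)%N /\ CC i = Ts k.
Proof.
move=> hc; elim=> [//|i IH] /andP [hi hin].
case: (posnP i) => [->|ip]; first by exists 1%N; rewrite CC1.
have [k [/andP [k1 ki] ek]] : exists k, (1 <= k <= i)%N /\ CC i = Ts k.
  apply: IH; rewrite ip /=; exact: ltnW.
rewrite CCS // ek.
have kn : (1 <= k <= n)%N by rewrite k1 /=; apply: leq_trans ki (ltnW hin).
have i1n : (1 <= i.+1 <= n)%N by rewrite hin.
case: (hc _ _ kn i1n) => [/setUidPl h|/setUidPr h].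
- exists i.+1; split; first by rewrite leqnn.
  exact: (setIidPr h).
- exists k; split; first by rewrite k1 /= (leq_trans ki).
  exact: (setIidPl h).
Qed.
End S.

Theorem claim4p4 (R : realFieldType) (M : finType) (H : {set M} -> R)
  (n : nat) (Ts : nat -> {set M})
  (H0 : H set0 = 0)
  (hcap : \bigcap_(1 <= l < n.+1) Ts l = set0)
  (hcase : supermodular H \/
           (forall i j : nat, (1 <= i <= n)%N -> (1 <= j <= n)%N ->
              Ts i :|: Ts j = Ts i \/ Ts i :|: Ts j = Ts j)) :
  \sum_(1 <= i < n.+1) H (Ts i)
    <= \sum_(1 <= i < n) H (Ts i.+1 :|: \bigcap_(1 <= l < i.+1) Ts l).
Proof.
have step : forall i, (1 <= i < n)%N ->
  H (Ts i.+1) + H (CC Ts i) <= H (Ts i.+1 :|: CC Ts i) + H (CC Ts i.+1).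
  move=> i /andP [i1 iin]; rewrite CCS //.
  case: hcase => [sm|hc].
    by rewrite setIC; apply: sm.
  have [k [/andP [k1 ki] ek]] := @CC_chain M Ts n hc i ltac:(by rewrite i1 /= ltnW).
  rewrite ek.
  have kn : (1 <= k <= n)%N by rewrite k1 /=; apply: leq_trans ki (ltnW iin).
  have i1n : (1 <= i.+1 <= n)%N by rewrite iin.
  case: (hc _ _ kn i1n) => [/setUidPl h|/setUidPr h].
  - by rewrite (setIidPr h) (setUidPr h) addrC.
  - by rewrite (setIidPl h) (setUidPl h).
case: n hcap hcase step => [|n] hcap hcase step.
  by rewrite !big_geq.
have main : forall k : nat, (1 <= k <= n.+1)%N ->
  \sum_(1 <= i < k.+1) H (Ts i) <= H (CC Ts k) + \sum_(1 <= i < k) H (Ts i.+1 :|: CC Ts i).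
  elim=> [//|k IH] /andP [_ kn].
  case: (posnP k) => [->|kp].
    by rewrite big_nat1 big_geq // CC1 addr0.
  rewrite big_nat_recr //= [X in _ <= _ + X]big_nat_recr //=.
  have := IH ltac:(by rewrite kp /= ltnW).
  have := step k ltac:(by rewrite kp kn).
  move=> h1 h2; lra.
have := main n.+1 ltac:(by rewrite leqnn).
by rewrite /CC hcap H0 add0r.
Qed.
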